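(* Let $(T,d)$ be a real tree. Then: (1) $\mathcal S\subset\mathcal B_0\subset\mathcal G$ and $\overline{\mathcal S}\subset\mathcal G$; (2) if $T$ is separable, then $\mathcal B_0=\mathcal B$ and $\overline{\mathcal S}=\mathcal G$.
   Context: A real tree is a geodesic $0$-hyperbolic (in the sense of Gromov) metric space; $[x,y]$ denotes the unique arc (segment) joining $x$ and $y$. $\mathcal G$ is the $\sigma$-algebra of subsets $S\subset T$ such that $S\cap[x,y]$ is Lebesgue-measurable in $[x,y]$ (identified isometrically with a real interval) for all $x,y\in T$; on it, the length measure is $\lambda(S)=\sup_R\sum_{i=1}^k\mathrm{Leb}_{S_i}(S_i\cap S)$, the supremum over finite disjoint unions $R=\bigcup_{i=1}^kS_i$ of segments. $\mathcal S$ is the $\sigma$-algebra generated by segments; $\overline{\mathcal S}$ is its completion with respect to $\lambda$-negligible sets (i.e. by adding subsets of sets in $\mathcal S$ of $\lambda$-measure zero); $\mathcal B$ is the Borel $\sigma$-algebra (generated by open sets); $\mathcal B_0$ is the $\sigma$-algebra generated by open balls. *)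

(* Defs.v *)
From mathcomp Require Import all_boot all_order all_algebra.
From mathcomp Require Import all_classical all_reals all_analysis.
Set Implicit Arguments. Unset Strict Implicit. Unset Printing Implicit Defensive.
Import Order.TTheory GRing.Theory Num.Theory.
Local Open Scope classical_set_scope.
Local Open Scope ring_scope.

Section RealTrees.
Variables (R : realType) (T : Type) (d : T -> T -> R).

Definition is_metric : Prop :=
  [/\ forall x y, 0 <= d x y,
      forall x y, d x y = 0 <-> x = y,
      forall x y, d x y = d y x &
      forall x y z, d x z <= d x y + d y z].

Definition geodesic (x y : T) (gamma : R -> T) : Prop :=
  [/\ gamma 0 = x, gamma (d x y) = y &
      forall s t, 0 <= s <= d x y -> 0 <= t <= d x y ->
        d (gamma s) (gamma t) = `|s - t|].

Definition geodesic_space : Prop :=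
  forall x y, exists gamma, geodesic x y gamma.

Definition gromov_product (w x y : T) : R := (d w x + d w y - d x y) / 2.

Definition zero_hyperbolic : Prop :=
  forall w x y z,
    Num.min (gromov_product w x z) (gromov_product w y z) <= gromov_product w x y.

Definition real_tree : Prop := [/\ is_metric, geodesic_space & zero_hyperbolic].

(* the segment [x,y]: the image of the (unique in a real tree) geodesic *)
Definition segment (x y : T) : set T :=
  [set z | exists gamma, geodesic x y gamma /\
                         exists t, 0 <= t <= d x y /\ gamma t = z].

(* image of S `&` [x,y] under the isometric identification z |-> d x z
   of [x,y] with the real interval [0, d x y] *)
Definition seg_coord (x y : T) (S : set T) : set R :=
  [set t | exists z, segment x y z /\ S z /\ d x z = t].

(* Lebesgue measurable subsets of R (completed Lebesgue sigma-algebra) *)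
Definition lebesgue_measurable (A : set R) : Prop :=
  @measurable _ (caratheodory_type (R:=R) (@wlength R idfun)^*%mu) A.

Definition sigmaG : set (set T) :=
  [set S | forall x y, lebesgue_measurable (seg_coord x y S)].

Definition seg_leb (x y : T) (S : set T) : \bar R :=
  completed_lebesgue_measure (seg_coord x y S).

Definition length_measure (S : set T) : \bar R :=
  ereal_sup [set v | exists (n : nat) (a b : nat -> T),
     (forall i j, (i < j < n)%N -> segment (a i) (b i) `&` segment (a j) (b j) = set0)
     /\ v = (\sum_(i < n) seg_leb (a i) (b i) S)%E].

Definition sigmaS : set (set T) := <<s [set segment x y | x in setT & y in setT] >>.

Definition sigmaS_completion : set (set T) :=
  <<s sigmaS `|` [set N | exists M, sigmaS M /\ length_measure M = 0%E /\ N `<=` M] >>.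

Definition open_ball (x : T) (r : R) : set T := [set y | d x y < r].

Definition metric_open (A : set T) : Prop :=
  forall x, A x -> exists2 r, 0 < r & open_ball x r `<=` A.

Definition sigmaB : set (set T) := <<s [set A | metric_open A] >>.

Definition sigmaB0 : set (set T) :=
  <<s [set B | exists x r, 0 < r /\ B = open_ball x r] >>.

Definition separable : Prop :=
  exists D : set T, countable D /\
    forall x e, 0 < e -> exists2 y, D y & d x y < e.

End RealTrees.

(* Main.v *)
From HB Require Import structures.
Require Import Defs.
From mathcomp Require Import all_boot all_order all_algebra.
From mathcomp Require Import all_classical all_reals all_analysis.
From mathcomp Require Import measurable_realfun ring lra.
Set Implicit Arguments. Unset Strict Implicit. Unset Printing Implicit Defensive.
Import Order.TTheory GRing.Theory Num.Theory.
Local Open Scope classical_set_scope.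
Local Open Scope ring_scope.

Section Geo.
Variables (R : realType) (T : Type) (d : T -> T -> R).
Hypothesis hT : real_tree d.

Lemma dge0 x y : 0 <= d x y. Proof. by case: hT => -[]. Qed.
Lemma dxx x : d x x = 0. Proof. by case: hT => -[_ h _ _] _ _; apply/(h x x). Qed.
Lemma d_eq0 x y : d x y = 0 -> x = y. Proof. by case: hT => -[_ h _ _] _ _; move/(h x y). Qed.
Lemma dC x y : d x y = d y x. Proof. by case: hT => -[]. Qed.
Lemma dtri x y z : d x z <= d x y + d y z. Proof. by case: hT => -[]. Qed.
Lemma hyp w x y z : Num.min (gromov_product d w x z) (gromov_product d w y z)
   <= gromov_product d w x y.
Proof. by case: hT => _ _; apply. Qed.

Lemma hyp' w x y z : gromov_product d w x z <= gromov_product d w x y \/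
  gromov_product d w y z <= gromov_product d w x y.
Proof. by have := hyp w x y z; rewrite ge_min => /orP. Qed.

Lemma uniq_pt x y z z' : d x z + d z y = d x y -> d x z' + d z' y = d x y ->
  d x z = d x z' -> z = z'.
Proof.
move=> h1 h2 h3; apply: d_eq0.
have := hyp' x z z' y; rewrite /gromov_product.
have := dge0 z z'; move=> h0.
case=> h; apply/eqP; rewrite eq_le h0 andbT; lra.
Qed.

Lemma geo_d0 x y g t : geodesic d x y g -> 0 <= t <= d x y -> d x (g t) = t.
Proof.
case=> g0 _ gi ht; rewrite -{1}g0 gi //; last by rewrite lexx dge0.
rewrite sub0r normrN ger0_norm //; by case/andP: ht.
Qed.

Lemma geo_d1 x y g t : geodesic d x y g -> 0 <= t <= d x y -> d (g t) y = d x y - t.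
Proof.
case=> _ gL gi ht; rewrite -{1}gL gi //; last by rewrite lexx dge0.
rewrite distrC ger0_norm // subr_ge0; by case/andP: ht.
Qed.

Lemma seg_char x y z : segment d x y z <-> d x z + d z y = d x y.
Proof.
split.
  case=> g [hg [t [ht <-]]]; rewrite (geo_d0 hg ht) (geo_d1 hg ht); lra.
move=> h; case: hT => _ /(_ x y) [g hg] _.
have ht : 0 <= d x z <= d x y by rewrite dge0 /=; have := dge0 z y; lra.
exists g; split => //; exists (d x z); split => //.
apply: (@uniq_pt x y).
- by rewrite (geo_d0 hg ht) (geo_d1 hg ht); lra.
- exact: h.
- by rewrite (geo_d0 hg ht).
Qed.

Lemma seg_coordE x y g S : geodesic d x y g ->
  seg_coord d x y S = [set t | 0 <= t <= d x y /\ S (g t)].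
Proof.
move=> hg; apply/seteqP; split=> t /=.
  case=> z [/seg_char hz [Sz <-]].
  have ht : 0 <= d x z <= d x y by rewrite dge0 /=; have := dge0 z y; lra.
  split => //; suff -> : g (d x z) = z by [].
  apply: (@uniq_pt x y).
  - by rewrite (geo_d0 hg ht) (geo_d1 hg ht); lra.
  - exact: hz.
  - by rewrite (geo_d0 hg ht).
case=> ht St; exists (g t); split; last by split => //; rewrite (geo_d0 hg).
by exists g; split => //; exists t.
Qed.


Lemma vshape1 x y g w t : geodesic d x y g -> 0 <= t <= d x y ->
  t <= gromov_product d x w y -> d w (g t) = d x w - t.
Proof.
move=> hg ht htp; have e1 := geo_d0 hg ht; have e2 := geo_d1 hg ht.
have e3 := dC (g t) y; have e4 := dC w (g t); have e5 := dC x (g t).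
have t1 := dtri x (g t) w.
have := hyp' x w (g t) y; move: htp; rewrite /gromov_product => htp.
case=> h; apply/eqP; rewrite eq_le; apply/andP; split; lra.
Qed.

Lemma vshape2 x y g w t : geodesic d x y g -> 0 <= t <= d x y ->
  gromov_product d x w y <= t -> d w (g t) = d y w - (d x y - t).
Proof.
move=> hg ht htp; have e1 := geo_d0 hg ht; have e2 := geo_d1 hg ht.
have e3 := dC (g t) y; have e4 := dC w (g t); have e5 := dC x (g t).
have e6 := dC x y; have e7 := dC w x; have e8 := dC w y.
have t1 := dtri y (g t) w.
have := hyp' y w (g t) x; move: htp; rewrite /gromov_product => htp.
case=> h; apply/eqP; rewrite eq_le; apply/andP; split; lra.
Qed.

End Geo.


Lemma sigma_bigcup_countable {I T} (G : set (set T)) (D : set I) (F : I -> set T) :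
  countable D -> (forall i, D i -> <<s G >> (F i)) -> <<s G >> (\bigcup_(i in D) F i).
Proof.
move=> cD hF.
have [->|/set0P[r Dr]] := eqVneq D set0.
  by rewrite bigcup_set0; exact: sigma_algebra0.
move: cD => /countable_injP[f injf].
rewrite -(injpinv_image (cst r) injf) bigcup_image bigcup_mkcond.
apply: sigma_algebra_bigcup => n; case: ifPn => [|_]; last exact: sigma_algebra0.
rewrite inE => -[i Di <-]; rewrite pinvKV //; last by rewrite inE.
exact: hF.
Qed.

Section LM.
Variable R : realType.

Lemma LMB (A : set R) : measurable A -> lebesgue_measurable A.
Proof. move=> mA. exact: sub_caratheodory. Qed.

Lemma LM_decomp (E : set R) : lebesgue_measurable E ->
  exists B N N', [/\ E = B `|` N, measurable B, measurable N',
     lebesgue_measure N' = 0%E & N `<=` N'].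
Proof.
rewrite /lebesgue_measurable -completed_caratheodory_measurable.
rewrite g_sigma_completed_algebra_genE => -[B mB [N [N' [mN' N0 NN']]] <-].
by exists B, N, N'.
Qed.

Definition rfl (c : R) (t : R) := c - t.

Lemma rfl_mf c : measurable_fun [set: measurableTypeR R] (rfl c).
Proof. by apply: measurable_funB => //; exact: measurable_cst. Qed.

Lemma rfl_meas c (N : set R) : measurable N -> measurable (rfl c @^-1` N).
Proof. by move=> mN; rewrite -[X in measurable X]setTI; apply: rfl_mf. Qed.

Definition reflm (c : R) (A : set (measurableTypeR R)) : \bar R :=
  lebesgue_measure (rfl c @^-1` A).

Let reflm0 c : reflm c set0 = 0%E.
Proof. by rewrite /reflm preimage_set0 measure0. Qed.

Let reflm_ge0 c A : (0 <= reflm c A)%E.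
Proof. exact: measure_ge0. Qed.

Let reflm_sigma_additive c : semi_sigma_additive (reflm c).
Proof.
move=> F mF tF mUF; rewrite /reflm preimage_bigcup.
apply: measure_semi_sigma_additive.
- by move=> n; apply: rfl_meas; exact: mF.
- apply/trivIsetP => /= i j _ _ ij; rewrite -preimage_setI.
  by move/trivIsetP : tF => /(_ _ _ _ _ ij) ->//; rewrite preimage_set0.
- by rewrite -preimage_bigcup; apply: rfl_meas; exact: mUF.
Qed.

HB.instance Definition _ c := isMeasure.Build _ _ _
  (reflm c) (reflm0 c) (reflm_ge0 c) (@reflm_sigma_additive c).

Lemma leb_reflect (c : R) (N : set R) : measurable N ->
  lebesgue_measure (rfl c @^-1` N) = lebesgue_measure N.
Proof.
move=> mN; symmetry.
apply: (@lebesgue_measure_unique R (reflm c)) => //.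
move=> X [[a b] _ <-] /=; rewrite /reflm.
have -> : rfl c @^-1` `]a, b]%classic = `[c - b, c - a[%classic.
  apply/seteqP; split => t /=; rewrite /rfl !in_itv /= => /andP[h1 h2];
  apply/andP; split; lra.
rewrite !lebesgue_measure_itv /= !lte_fin.
case: ltP => h; case: ltP => h';
  first [ by rewrite -!EFinB; congr (_%:E); ring | (exfalso; lra) | done ].
Qed.

End LM.


Section SigmaHelp.
Variables (T : Type) (G : set (set T)).
Lemma s0 : <<s G >> set0. Proof. exact: sigma_algebra0. Qed.
Lemma sC A : <<s G >> A -> <<s G >> (~` A).
Proof. by move=> h; rewrite -setTD; exact: sigma_algebraCD. Qed.
Lemma sU A B : <<s G >> A -> <<s G >> B -> <<s G >> (A `|` B).
Proof.
move=> hA hB; rewrite -bigcup2E; apply: sigma_algebra_bigcup => -[|[|i]] //=.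
exact: s0.
Qed.
Lemma sI A B : <<s G >> A -> <<s G >> B -> <<s G >> (A `&` B).
Proof.
move=> hA hB; rewrite -[A `&` B]setCK setCI; apply: sC; apply: sU; exact: sC.
Qed.
Lemma sD A B : <<s G >> A -> <<s G >> B -> <<s G >> (A `\` B).
Proof. by move=> hA hB; rewrite setDE; apply: sI => //; exact: sC. Qed.
Lemma sbigcap (F : (set T)^nat) : (forall n, <<s G >> (F n)) -> <<s G >> (\bigcap_n F n).
Proof.
move=> h; rewrite -[X in <<s G >> X]setCK setC_bigcap; apply: sC.
by apply: sigma_algebra_bigcup => n; exact: sC.
Qed.
End SigmaHelp.

Lemma archi_small (R : realType) (e : R) : 0 < e -> exists n : nat, n.+1%:R^-1 < e.
Proof.
move=> e0; exists (Num.truncn (e^-1)).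
have ei : 0 < e^-1 by rewrite invr_gt0.
have := truncn_itv (ltW ei); case/andP => _ h.
set m := (Num.truncn e^-1).+1%:R in h *.
have m0 : 0 < m by rewrite /m ltr0n.
by rewrite -(invrK e) ltf_pV2 // ?posrE.
Qed.

Section Part1.
Variables (R : realType) (T : Type) (d : T -> T -> R).
Hypothesis hT : real_tree d.

Lemma geo_ex x y : exists g, geodesic d x y g.
Proof. by case: hT => _ /(_ x y). Qed.
Definition geo x y := projT1 (cid (geo_ex x y)).
Lemma geoP x y : geodesic d x y (geo x y).
Proof. by rewrite /geo; case: cid. Qed.

Lemma seg_pt x y z : segment d x y z ->
  0 <= d x z <= d x y /\ geo x y (d x z) = z.
Proof.
move=> /(seg_char hT) h.
have ht : 0 <= d x z <= d x y by rewrite (dge0 hT) /=; have := dge0 hT z y; lra.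
split => //; apply: (@uniq_pt _ _ _ hT x y).
- by rewrite (geo_d0 hT (geoP x y) ht) (geo_d1 hT (geoP x y) ht); lra.
- exact: h.
- by rewrite (geo_d0 hT (geoP x y) ht).
Qed.

Lemma seg_geo x y t : 0 <= t <= d x y -> segment d x y (geo x y t).
Proof. by move=> ht; exists (geo x y); split; [exact: geoP | exists t]. Qed.

Lemma seg_B0 x y : sigmaB0 d (segment d x y).
Proof.
pose g := geo x y; pose L := d x y; pose r (n : nat) : R := n.+1%:R^-1.
have r0 n : 0 < r n by rewrite /r invr_gt0 ltr0n.
pose V n := \bigcup_(k in setT) open_ball d (g (Num.min (k%:R * r n) L)) (r n).
have -> : segment d x y = \bigcap_(n in setT) V n.
  apply/seteqP; split => z.
    move=> /seg_pt [ht gz] n _; set t := d x z in ht gz.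
    have t0 : 0 <= t by case/andP: ht.
    pose m : R := n.+1%:R.
    have m0 : 0 < m by rewrite /m ltr0n.
    have hrm : r n * m = 1 by rewrite /r mulVf // gt_eqF.
    have := truncn_itv (mulr_ge0 t0 (ltW m0)); case/andP.
    set k := Num.truncn (t * m) => h1 h2.
    have e1 : k%:R * r n <= t.
      by rewrite -(ler_pM2r m0) -mulrA mulVf ?gt_eqF // mulr1.
    have e2 : t < k%:R * r n + r n.
      by rewrite -(ltr_pM2r m0) mulrDl -mulrA mulVf ?gt_eqF // mulr1 natr1.
    exists k => //; rewrite /open_ball /= -gz.
    have hkL : Num.min (k%:R * r n) L = k%:R * r n.
      by apply/min_idPl; rewrite /L; case/andP: ht => _; lra.
    have hk : 0 <= k%:R * r n <= d x y.
      rewrite mulr_ge0 ?ler0n ?(ltW (r0 n)) //=; case/andP: ht => _; lra.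
    rewrite hkL /g; case: (geoP x y) => _ _ -> //.
    rewrite distrC ger0_norm; lra.
  move=> hz; apply/(seg_char hT).
  pose e := d x z + d z y - L.
  have e0 : 0 <= e by have := dtri hT x z y; rewrite /e /L; lra.
  have he : forall n, e < 2 * r n.
    move=> n; case: (hz n I) => k _; rewrite /open_ball /=.
    set tk := Num.min _ _ => hd.
    have htk : 0 <= tk <= L.
      rewrite /tk ge_min le_min lexx orbT andbT (dge0 hT) andbT.
      by rewrite mulr_ge0 ?ler0n ?(ltW (r0 n)).
    have t1 := dtri hT x (g tk) z; have t2 := dtri hT z (g tk) y.
    have := geo_d0 hT (geoP x y) htk; have := geo_d1 hT (geoP x y) htk.
    have := dC hT z (g tk).
    rewrite -/g -/L => a3 a1 a2; rewrite /e; lra.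
  apply/eqP; rewrite -subr_eq0 -/L -/e eq_le e0 andbT.
  rewrite leNgt; apply/negP => ep.
  have [n hn] := archi_small (divr_gt0 ep (ltr0n R 2)).
  have := he n; rewrite /r => hh; set q := n.+1%:R^-1 in hn hh; lra.
apply: sbigcap => n; apply: sigma_algebra_bigcup => k.
apply: sub_sigma_algebra; exists (g (Num.min (k%:R * r n) L)), (r n); split => //.
Qed.


Lemma seg_coordG x y S : seg_coord d x y S =
  [set t | 0 <= t <= d x y /\ S (geo x y t)].
Proof. exact: (seg_coordE hT S (geoP x y)). Qed.

Lemma G_sigma : sigma_algebra setT (sigmaG d).
Proof.
split.
- move=> x y; rewrite (_ : seg_coord d x y set0 = set0); first exact: measurable0.
  by apply/seteqP; split => t // [z [_ []]].
- move=> A hA x y; rewrite (_ : seg_coord d x y (setT `\` A) =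
     `[0, d x y]%classic `\` seg_coord d x y A).
    apply: measurableD; last exact: hA.
    by apply: LMB; exact: measurable_itv.
  rewrite !seg_coordG; apply/seteqP; split => t /=; rewrite in_itv /=.
    by move=> [ht [_ nA]]; split => // -[].
  by move=> [ht nA]; split => //; split => // hA'; apply: nA.
- move=> F hF x y; rewrite (_ : seg_coord d x y (\bigcup_k F k) =
     \bigcup_k seg_coord d x y (F k)).
    by apply: bigcupT_measurable => k; exact: hF.
  apply/seteqP; split => t.
    by move=> [z [sz [[k _ Fz] <-]]]; exists k => //; exists z.
  by move=> [k _ [z [sz [Fz <-]]]]; exists z; split => //; split => //; exists k.
Qed.

Lemma ball_G w r : sigmaG d (open_ball d w r).
Proof.
move=> x y; rewrite seg_coordG.
set L := d x y; set p := gromov_product d x w y.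
rewrite (_ : [set t | _] = `[0, L]%classic `&`
  ((`]-oo, p]%classic `&` `]d x w - r, +oo[%classic) `|`
   (`[p, +oo[%classic `&` `]-oo, r + L - d y w[%classic))).
  apply: LMB; apply: measurableI; first exact: measurable_itv.
  by apply: measurableU; apply: measurableI; exact: measurable_itv.
apply/seteqP; split => t /=; rewrite !in_itv /= ?andbT.
  move=> [ht hb]; split => //; rewrite /open_ball /= in hb.
  have [tp|pt] := lerP t p.
    by left; split => //; move: hb; rewrite (vshape1 hT (geoP x y) ht tp); lra.
  right; split; first exact: ltW.
  by move: hb; rewrite (vshape2 hT (geoP x y) ht (ltW pt)) -/L; lra.
move=> [ht [[tp hb]|[pt hb]]]; split => //; rewrite /open_ball /=.
  by rewrite (vshape1 hT (geoP x y) ht tp); lra.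
by rewrite (vshape2 hT (geoP x y) ht pt) -/L; lra.
Qed.

Lemma S_B0 : sigmaS d `<=` sigmaB0 d.
Proof.
apply: smallest_sub; first exact: smallest_sigma_algebra.
by move=> _ [x _ [y _ <-]]; exact: seg_B0.
Qed.

Lemma B0_G : sigmaB0 d `<=` sigmaG d.
Proof.
apply: smallest_sub; first exact: G_sigma.
by move=> _ [w [r [r0 ->]]]; exact: ball_G.
Qed.

Lemma seg_leb_le x y M : (seg_leb d x y M <= length_measure d M)%E.
Proof.
apply: le_ereal_sup_tmp; exists (seg_leb d x y M) => //.
exists 1%N, (fun _ => x), (fun _ => y); split.
  by move=> i j /andP[ij]; rewrite ltnS leqn0 => /eqP j0; move: ij; rewrite j0.
by rewrite big_ord1.
Qed.

Lemma Sbar_G : sigmaS_completion d `<=` sigmaG d.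
Proof.
apply: smallest_sub; first exact: G_sigma.
move=> A [SA|[M [SM [M0 AM]]]].
  by apply: B0_G; apply: S_B0.
move=> x y; apply: negligible_sub_caratheodory.
exists (seg_coord d x y M); split.
- by apply: B0_G; apply: S_B0.
- apply/eqP; rewrite eq_le measure_ge0 andbT.
  by have := seg_leb_le x y M; rewrite M0.
- by move=> t [z [sz [Az <-]]]; exists z; split => //; split => //; exact: AM.
Qed.

End Part1.


Section Part2a.
Variables (R : realType) (T : Type) (d : T -> T -> R).
Hypothesis hT : real_tree d.

Lemma ball_open w r : metric_open d (open_ball d w r).
Proof.
move=> z hz; exists (r - d w z); first by rewrite /open_ball /= in hz; lra.
move=> u; rewrite /open_ball /= => hu.
have := dtri hT w z u; lra.
Qed.

Lemma B0_B : sigmaB0 d `<=` sigmaB d.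
Proof.
apply: smallest_sub; first exact: smallest_sigma_algebra.
by move=> _ [w [r [r0 ->]]]; apply: sub_sigma_algebra; exact: ball_open.
Qed.

Lemma B_B0 : separable d -> sigmaB d `<=` sigmaB0 d.
Proof.
move=> [D [cD hD]].
apply: smallest_sub; first exact: smallest_sigma_algebra.
move=> A oA.
pose r (n : nat) : R := n.+1%:R^-1.
have r0 n : 0 < r n by rewrite /r invr_gt0 ltr0n.
pose P := [set p : T * nat | D p.1 /\ open_ball d p.1 (r p.2) `<=` A].
have -> : A = \bigcup_(p in P) open_ball d p.1 (r p.2).
  apply/seteqP; split => [z Az|z [p [Dp hp] hz]]; last exact: hp.
  have [e e0 he] := oA z Az.
  have [n hn] := archi_small (divr_gt0 e0 (ltr0n R 2)).
  have [y Dy hy] := hD z (r n) (r0 n).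
  exists (y, n) => /=.
    split => // u; rewrite /open_ball /= => hu; apply: he.
    rewrite /open_ball /=; have := dtri hT z y u.
    move: hn hy hu; rewrite /r; set q := n.+1%:R^-1; lra.
  by rewrite /open_ball /= (dC hT).
apply: sigma_bigcup_countable.
  apply: (@sub_countable _ _ _ (D `*` setT)); first by apply: subset_card_le => p [].
  by apply: countableX.
by move=> [y n] _; apply: sub_sigma_algebra; exists y, (r n).
Qed.

End Part2a.


Section Part2b.
Variables (R : realType) (T : Type) (d : T -> T -> R).
Hypothesis hT : real_tree d.

Lemma lm0 (x0 : T) M : (forall a b, seg_leb d a b M = 0%E) -> length_measure d M = 0%E.
Proof.
move=> h; apply/eqP; rewrite eq_le; apply/andP; split.
  apply: ge_ereal_sup => v [n [a [b [_ ->]]]].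
  by rewrite big1 // => i _; rewrite h.
apply: le_ereal_sup_tmp; exists 0%E => //.
exists 0%N, (fun _ => x0), (fun _ => x0); split; first by move=> i j /andP[_]; rewrite ltn0.
by rewrite big_ord0.
Qed.

Definition Img x y (X : set R) : set T :=
  geo hT x y @` (X `&` [set t | 0 <= t <= d x y]).

Lemma geo_inj x y s t : 0 <= s <= d x y -> 0 <= t <= d x y ->
  geo hT x y s = geo hT x y t -> s = t.
Proof.
move=> hs ht e; rewrite -(geo_d0 hT (geoP hT x y) hs) -(geo_d0 hT (geoP hT x y) ht).
by rewrite e.
Qed.

Lemma ImgD x y B C : Img x y (B `\` C) = Img x y B `\` Img x y C.
Proof.
apply/seteqP; split => z.
  move=> [t [[Bt nCt] ht] <-]; split; first by exists t.
  move=> [t' [Ct' ht'] e]; apply: nCt.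
  by rewrite -(geo_inj ht' ht e).
by move=> [[t [Bt ht] <-] nC]; exists t => //; split => //; split => // Ct; apply: nC; exists t.
Qed.

Lemma ImgT x y : Img x y setT = segment d x y.
Proof.
apply/seteqP; split => z.
  by move=> [t [_ ht] <-]; exact: seg_geo.
by move=> /(seg_pt hT) [ht <-]; exists (d x z).
Qed.

Lemma Img_ray x y r : sigmaS d (Img x y [set t | t <= r]).
Proof.
have [r0|r0] := ltP r 0.
  rewrite (_ : Img x y _ = set0); first exact: s0.
  by apply/seteqP; split => z // [t [/= tr /andP[t0 _]] _]; exfalso; lra.
pose s := Num.min r (d x y).
have hs : 0 <= s <= d x y by rewrite /s le_min r0 (dge0 hT) ge_min lexx orbT.
rewrite (_ : Img x y _ = segment d x (geo hT x y s)).
  by apply: sub_sigma_algebra; exists x => //; exists (geo hT x y s).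
have gs := geo_d0 hT (geoP hT x y) hs.
apply/seteqP; split => z.
  move=> [t [/= tr ht] <-]; apply/(seg_char hT).
  rewrite gs (geo_d0 hT (geoP hT x y) ht).
  case: (geoP hT x y) => _ _ -> //.
  have ts : t <= s by rewrite /s le_min tr; case/andP: ht.
  rewrite distrC ger0_norm; lra.
move=> /(seg_char hT); rewrite gs => hz.
have hzs := dtri hT z (geo hT x y s) y.
have := geo_d1 hT (geoP hT x y) hs => e1.
have sz : segment d x y z.
  apply/(seg_char hT); apply/eqP; rewrite eq_le (dtri hT x z y) andbT.
  have := dge0 hT z (geo hT x y s); lra.
have [ht gz] := seg_pt hT sz.
exists (d x z) => //; split => //=.
have h0 := dge0 hT z (geo hT x y s).
have : d x z <= s by lra.
by rewrite /s le_min => /andP[].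
Qed.


Lemma Img_sigma x y : sigma_algebra setT [set B | sigmaS d (Img x y B)].
Proof.
split => /=.
- by rewrite /Img set0I image_set0; exact: s0.
- move=> B hB; rewrite ImgD ImgT; apply: sD => //.
  by apply: sub_sigma_algebra; exists x => //; exists y.
- move=> F hF; rewrite /Img setI_bigcupl image_bigcup.
  exact: sigma_algebra_bigcup.
Qed.

Lemma Img_borel x y (B : set R) : measurable B -> sigmaS d (Img x y B).
Proof.
move=> mB; apply: (smallest_sub (Img_sigma x y) _ mB).
move=> _ [[a b] _ <-] /=.
rewrite (_ : `]a, b]%classic = [set t | t <= b] `\` [set t | t <= a]).
  by rewrite ImgD; apply: sD; exact: Img_ray.
apply/seteqP; split => t /=; rewrite in_itv /=.
  by move=> /andP[h1 h2]; split => //; lra.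
by move=> [h1 h2]; apply/andP; split => //; lra.
Qed.


Lemma Img_null x y N' : measurable N' -> lebesgue_measure N' = 0%E ->
  length_measure d (Img x y N') = 0%E.
Proof.
move=> mN N0; apply: (lm0 x) => a b.
set M := Img x y N'.
have MG : sigmaG d M by apply: (B0_G hT); apply: (S_B0 hT); exact: Img_borel.
pose P1 := rfl (d x a) @^-1` N'.
pose P2 := rfl (d y a - d x y) @^-1` (rfl 0 @^-1` N').
have mP1 : measurable P1 by exact: rfl_meas.
have mP2 : measurable P2 by apply: rfl_meas; exact: rfl_meas.
have P10 : lebesgue_measure P1 = 0%E by rewrite /P1 leb_reflect.
have P20 : lebesgue_measure P2 = 0%E.
  by rewrite /P2 leb_reflect ?leb_reflect //; exact: rfl_meas.
have sub : seg_coord d a b M `<=` P1 `|` P2.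
  move=> _ [z [_ [[t [Nt ht] <-] <-]]].
  have [tp|pt] := lerP t (gromov_product d x a y).
    left; rewrite /P1 /= (vshape1 hT (geoP hT x y) ht tp) /rfl.
    by have -> : d x a - (d x a - t) = t by ring.
  right; rewrite /P2 /= (vshape2 hT (geoP hT x y) ht (ltW pt)) /rfl.
  by have -> : 0 - (d y a - d x y - (d y a - (d x y - t))) = t by ring.
apply/eqP; rewrite eq_le measure_ge0 andbT /seg_leb.
have h1 : (completed_lebesgue_measure (seg_coord d a b M) <=
    completed_lebesgue_measure (P1 `|` P2))%E.
  apply: le_measure => //; rewrite ?inE; first exact: MG.
  by apply: LMB; apply: measurableU.
apply: (le_trans h1).
change (lebesgue_measure (P1 `|` P2) <= 0)%E.
have h2 : (lebesgue_measure (P1 `|` P2) <= lebesgue_measure P1 + lebesgue_measure P2)%E.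
  exact: (measureU2 (@lebesgue_measure R) mP1 mP2).
by rewrite P10 P20 adde0 in h2.
Qed.

Lemma K x y A : sigmaG d A -> sigmaS_completion d (A `&` segment d x y).
Proof.
move=> hA; have := hA x y; move=> /LM_decomp [B [N [N' [E mB mN' N0 NN']]]].
have -> : A `&` segment d x y = Img x y B `|` Img x y N.
  rewrite /Img -image_setU -setIUl -E (seg_coordG hT).
  apply/seteqP; split => z.
    move=> [Az /(seg_pt hT) [ht gz]]; exists (d x z) => //.
    by split => //; split => //; rewrite gz.
  by move=> [t [[ht At] _] <-]; split => //; exact: seg_geo.
apply: sU.
  by apply: sub_sigma_algebra; left; exact: Img_borel.
apply: sub_sigma_algebra; right; exists (Img x y N'); split; first exact: Img_borel.
split; first exact: Img_null.
by apply: image_subset; apply: setSI.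
Qed.

End Part2b.


Section Part2c.
Variables (R : realType) (T : Type) (d : T -> T -> R).
Hypothesis hT : real_tree d.
Variables (x0 : T) (D : set T).
Hypothesis hD : forall x e, 0 < e -> exists2 y, D y & d x y < e.

Lemma leaf_aux z a : 0 < d z a -> gromov_product d z a x0 <= 0 ->
  exists2 y, D y & segment d x0 y z.
Proof.
move=> za h; have [y Dy hy] := hD a za.
exists y => //; apply/(seg_char hT).
have := hyp' hT z x0 a y; move: h; rewrite /gromov_product => h.
have t1 := dtri hT z y a; have t2 := dtri hT x0 z y.
have c1 := dC hT z x0; have c2 := dC hT x0 a; have c3 := dC hT a y.
case=> h'; apply/eqP; rewrite eq_le t2 andbT; lra.
Qed.

Let U := \bigcup_(y in D) segment d x0 y.

Lemma leaf_coord a b : seg_coord d a b (~` U) `<=` [set 0] `|` [set d a b].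
Proof.
move=> _ [z [/(seg_char hT) sz [nU <-]]].
have [->|za0] := eqVneq (d a z) 0; first by left.
have [e|zb0] := eqVneq (d a z) (d a b); first by right.
exfalso; apply: nU.
have za : 0 < d z a by rewrite dC // lt_def za0 dge0.
have zb : 0 < d z b.
  rewrite lt_def dge0 // andbT; apply/eqP => h; move/eqP: zb0; apply; lra.
have ab : gromov_product d z a b = 0 by rewrite /gromov_product (dC hT z a); lra.
have := hyp' hT z a b x0; rewrite ab; case=> h.
  exact: (leaf_aux za h).
exact: (leaf_aux zb h).
Qed.

Lemma L0_null : sigmaS d (~` U) -> length_measure d (~` U) = 0%E.
Proof.
move=> hS; apply: (lm0 x0) => a b.
have MG : sigmaG d (~` U) by apply: (B0_G hT); exact: (S_B0 hT).
have m1 : measurable [set (0 : R)] by exact: measurable_set1.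
have m2 : measurable [set d a b] by exact: measurable_set1.
apply/eqP; rewrite eq_le measure_ge0 andbT /seg_leb.
have h1 : (completed_lebesgue_measure (seg_coord d a b (~` U)) <=
    completed_lebesgue_measure ([set 0%R] `|` [set d a b]))%E.
  apply: le_measure; rewrite ?inE; first exact: MG.
    by apply: LMB; apply: measurableU.
  exact: leaf_coord.
apply: (le_trans h1).
change (lebesgue_measure ([set 0%R] `|` [set d a b]) <= 0)%E.
have h2 : (lebesgue_measure ([set 0%R] `|` [set d a b]) <=
   lebesgue_measure [set 0%R] + lebesgue_measure [set d a b])%E.
  exact: (measureU2 (@lebesgue_measure R) m1 m2).
by rewrite !lebesgue_measure_set1 adde0 in h2.
Qed.

End Part2c.

Lemma G_Sbar (R : realType) (T : Type) (d : T -> T -> R) (hT : real_tree d) :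
  separable d -> sigmaG d `<=` sigmaS_completion d.
Proof.
move=> [D [cD hD]] A hA.
have [->|/set0P[x0 _]] := eqVneq A set0; first exact: s0.
pose U := \bigcup_(y in D) segment d x0 y.
have US : sigmaS d U.
  apply: sigma_bigcup_countable cD _ => y _.
  by apply: sub_sigma_algebra; exists x0 => //; exists y.
have -> : A = (A `&` ~` U) `|` \bigcup_(y in D) (A `&` segment d x0 y).
  apply/seteqP; split => z.
    move=> Az; have [[y Dy sy]|nU] := pselect (U z).
      by right; exists y.
    by left.
  by case=> [[]|[y _ []]].
apply: sU.
  apply: sub_sigma_algebra; right; exists (~` U); split; first exact: sC.
  split; last exact: subIsetr.
  by apply: (L0_null hT hD); exact: sC.
apply: sigma_bigcup_countable cD _ => y _; exact: K.
Qed.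

Theorem proposition4 (R : realType) (T : Type) (d : T -> T -> R) :
  real_tree d ->
  ((sigmaS d `<=` sigmaB0 d /\ sigmaB0 d `<=` sigmaG d)
    /\ sigmaS_completion d `<=` sigmaG d)
  /\ (separable d -> sigmaB0 d = sigmaB d /\ sigmaS_completion d = sigmaG d).
Proof.
move=> hT; split.
  by split; [split; [exact: S_B0 | exact: B0_G] | exact: Sbar_G].
move=> hsep; split.
  by apply/seteqP; split; [exact: B0_B | exact: B_B0].
by apply/seteqP; split; [exact: Sbar_G | exact: G_Sbar].
Qed.
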